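(* Let $G=(V,E)$ be a graph, $v\in V$, and $S_v$ the partial star product of $v$. Then: (1) if $e,f\in E_v$ and $(e,f)\in\mathfrak d_v^*$, there is no square in $S_v$ spanned by $e$ and $f$; (2) every square ($4$-cycle) in $S_v$ contains two edges of $E_v$ and two edges of $F_v$, and every edge $f\in F_v$ is the opposite edge of some primal edge $e\in E_v$ in a chordless square of $S_v$; (3) every non-primal vertex of $S_v$ is the unique top vertex of some square spanned by two edges $e,e'\in E_v$ (i.e. a top vertex $x$ of a square $v,u,x,w$ such that $u,w$ are the only common neighbours of $v$ and $x$).
   Context: All graphs are finite, simple and undirected. For a graph $G=(V,E)$ and $v\in V$, $E_v$ denotes the set of edges incident to $v$. For two distinct adjacent edges $e=(v,u)$, $f=(v,w)$, a square spanned by $e$ and $f$ is a $4$-cycle $v,u,x,w,v$ with $x\notin\{v,u,w\}$; $x$ is its top vertex. The square is chordless if neither $(u,w)$ nor $(v,x)$ is an edge of $G$. In a chordless square $v,u,x,w$, $(x,w)$ is the opposite edge of $(v,u)$ and $(x,u)$ is the opposite edge of $(v,w)$ (and vice versa). The relation $\delta(G)\subseteq E\times E$: $(e,f)\in\delta(G)$ iff (i) $e,f$ are distinct adjacent edges and it is not the case that $e$ and $f$ span exactly one square and that square is chordless; or (ii) $e,f$ are opposite edges of a chordless square; or (iii) $e=f$. Define $\mathfrak d_v=((E_v\times E)\cup(E\times E_v))\cap\delta(G)$ and $\mathfrak d_v^*$ the finest equivalence relation on $E$ containing $\mathfrak d_v$. Let $F_v\subseteq E\setminus E_v$ be the set of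 edges that are the edges not incident to $v$ of some chordless square spanned by two edges $e,e'\in E_v$ with $(e,e')\notin\mathfrak d_v^*$. The partial star product $S_v$ is the subgraph of $G$ with edge set $E_v\cup F_v$ and vertex set the endpoints of these edges; neighbours of $v$ are primal vertices, and the other vertices of $S_v$ distinct from $v$ are non-primal vertices. *)

(* Defs.v *)
(* A simple graph is a symmetric irreflexive relation [adj]
   on a finite type [T]; an edge is a 2-element vertex set [set x; y] with
   [adj x y]. *)
From mathcomp Require Import all_boot.
Set Implicit Arguments. Unset Strict Implicit. Unset Printing Implicit Defensive.

Section PartialStar.
Variable T : finType.
Variable adj : rel T.

Definition is_edge (e : {set T}) : bool :=
  [exists x, exists y, adj x y && (e == [set x; y])].
Definition Eset : {set {set T}} := [set e | is_edge e].
Definition Eat (v : T) : {set {set T}} := [set e in Eset | v \in e].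

Definition square (r : rel T) (a b c d : T) : bool :=
  [&& r a b, r b c, r c d, r d a, a != c & b != d].

Definition chordless (v u x w : T) : bool :=
  [&& square adj v u x w, ~~ adj u w & ~~ adj v x].

Definition adj_edges (e f : {set T}) : bool :=
  [&& e \in Eset, f \in Eset, e != f & #|e :&: f| == 1].

(* the squares (v,u,x,w) spanned by e = (v,u) and f = (v,w) *)
Definition spanned (e f : {set T}) : {set T * T * T * T} :=
  [set q : T * T * T * T |
     [&& e == [set q.1.1.1; q.1.1.2], f == [set q.1.1.1; q.2] &
         square adj q.1.1.1 q.1.1.2 q.1.2 q.2]].

Definition one_chordless_square (e f : {set T}) : bool :=
  (#|spanned e f| == 1) &&
  [forall q in spanned e f, chordless q.1.1.1 q.1.1.2 q.1.2 q.2].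

Definition opposite (a b : {set T}) : bool :=
  [exists v, exists u, exists x, exists w,
     chordless v u x w &&
     [|| (a == [set v; u]) && (b == [set x; w]),
         (a == [set x; w]) && (b == [set v; u]),
         (a == [set v; w]) && (b == [set x; u]) |
         (a == [set x; u]) && (b == [set v; w])]].

Definition delta (e f : {set T}) : bool :=
  [&& e \in Eset, f \in Eset &
      [|| adj_edges e f && ~~ one_chordless_square e f, opposite e f | e == f]].

Definition dv (v : T) (e f : {set T}) : bool :=
  delta e f && ((e \in Eat v) || (f \in Eat v)).

(* d_v^* : finest equivalence relation on E containing d_v *)
Definition dstar (v : T) (e f : {set T}) : bool :=
  [&& e \in Eset, f \in Eset &
      connect [rel a b | dv v a b || dv v b a] e f].

Definition Fv (v : T) : {set {set T}} :=
  [set f in Eset | (v \notin f) &&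
     [exists u, exists x, exists w,
        [&& ~~ dstar v [set v; u] [set v; w], chordless v u x w &
            (f == [set u; x]) || (f == [set x; w])]]].

Definition SvE (v : T) : {set {set T}} := Eat v :|: Fv v.
Definition adjS (v : T) : rel T := fun a b => [set a; b] \in SvE v.
Definition SvV (v : T) : {set T} := [set x | [exists e in SvE v, x \in e]].

Definition nonprimal (v x : T) : bool := [&& x \in SvV v, x != v & ~~ adj v x].

End PartialStar.

(* Main.v *)
Require Import Defs.
From mathcomp Require Import all_boot.
Set Implicit Arguments. Unset Strict Implicit. Unset Printing Implicit Defensive.

Section H.
Variable T : finType.
Variable adj : rel T.
Hypothesis adj_sym : symmetric adj.
Hypothesis adj_irr : irreflexive adj.

Lemma set2_inj (a b c d : T) : [set a; b] = [set c; d] ->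
  (a = c /\ b = d) \/ (a = d /\ b = c).
Proof.
move=> E.
have ha : a \in [set c; d] by rewrite -E set21.
have hb : b \in [set c; d] by rewrite -E set22.
have hc : c \in [set a; b] by rewrite E set21.
have hd : d \in [set a; b] by rewrite E set22.
move: ha hb hc hd; rewrite !inE.
case/orP=> /eqP Ea; case/orP=> /eqP Eb; case/orP=> /eqP Ec; case/orP=> /eqP Ed;
  subst; auto.
Qed.

Lemma adj_neq (a b : T) : adj a b -> a != b.
Proof. by apply: contraTneq => ->; rewrite adj_irr. Qed.

Lemma edgeP (a b : T) : ([set a; b] \in Eset adj) = adj a b.
Proof.
rewrite inE /is_edge; apply/idP/idP.
  case/existsP=> p /existsP [q /andP [hpq /eqP E]].
  by case: (set2_inj E) => [[-> ->]|[-> ->]] //; rewrite adj_sym.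
by move=> h; apply/existsP; exists a; apply/existsP; exists b; rewrite h eqxx.
Qed.

Lemma EsetP (e : {set T}) : e \in Eset adj -> exists p q, adj p q /\ e = [set p; q].
Proof.
rewrite inE => /existsP [p /existsP [q /andP [h /eqP ->]]]; by exists p, q.
Qed.

Lemma EatP (a b : T) (v : T) : ([set a; b] \in Eat adj v) = adj a b && ((v == a) || (v == b)).
Proof. by rewrite inE edgeP !inE. Qed.

Lemma Eat_vu (v u : T) : adj v u -> [set v; u] \in Eat adj v.
Proof. by move=> h; rewrite EatP h eqxx. Qed.

Lemma SvE_Eset v e : e \in SvE adj v -> e \in Eset adj.
Proof. by rewrite inE !inE => /orP [/andP[]|/andP[]]. Qed.

Lemma adjS_adj v a b : adjS adj v a b -> adj a b.
Proof. by move/SvE_Eset; rewrite edgeP. Qed.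

Lemma adjS_sym v a b : adjS adj v a b = adjS adj v b a.
Proof. by rewrite /adjS setUC. Qed.

Lemma chordless_sym v u x w : chordless adj v u x w -> chordless adj v w x u.
Proof.
rewrite /chordless /square => /and3P [/and5P [h1 h2 h3 h4 /andP [h5 h6]] h7 h8].
by rewrite (adj_sym v w) h4 (adj_sym w x) h3 (adj_sym x u) h2 (adj_sym u v) h1 h5
  eq_sym h6 (adj_sym w u) h7 h8.
Qed.


Lemma dstar_sym v e f : dstar adj v e f -> dstar adj v f e.
Proof.
case/and3P=> he hf hc; rewrite /dstar hf he /=.
by rewrite sym_connect_sym // => a b /=; rewrite orbC.
Qed.

Lemma dstar_trans v e f g : dstar adj v e f -> dstar adj v f g -> dstar adj v e g.
Proof.
case/and3P=> he _ h1; case/and3P=> _ hg h2; rewrite /dstar he hg /=.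
exact: connect_trans h1 h2.
Qed.

Lemma dv_dstar v e f : dv adj v e f -> dstar adj v e f.
Proof.
move=> h; have := h; rewrite /dv /delta => /andP [/and3P [he hf _] _].
by rewrite /dstar he hf /=; apply: connect1; rewrite /= h.
Qed.

Lemma delta_two (c p p' y y' : T) : square adj c p y p' -> square adj c p y' p' ->
  y != y' -> delta adj [set c; p] [set c; p'].
Proof.
move=> s1 s2 yy.
move: (s1) => /and5P [h1 h2 h3 h4 /andP [h5 h6]].
have cp := adj_neq h1.
have cp' : c != p' by rewrite eq_sym adj_neq.
rewrite /delta !edgeP h1 adj_sym h4 /=.
apply/orP; left; apply/andP; split.
  rewrite /adj_edges !edgeP h1 adj_sym h4 /=; apply/andP; split.
    by apply/eqP => /set2_inj [[_ /eqP]|[/eqP]]; rewrite ?(negbTE h6) ?(negbTE cp').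
  have -> : [set c; p] :&: [set c; p'] = [set c].
    apply/setP=> z; rewrite !inE; case: (eqVneq z c) => //= _.
    by case: (eqVneq z p) => //= ->; rewrite (negbTE h6).
  by rewrite cards1.
rewrite /one_chordless_square negb_and; apply/orP; left.
suff : 1 < #|spanned adj [set c; p] [set c; p']| by case: #|_| => [|[|]].
apply/card_gt1P; exists (c, p, y, p'), (c, p, y', p'); rewrite !inE /= !eqxx s1 s2 /=.
split => //; by apply: contraNneq yy => -[->].
Qed.

Lemma eq_sym_neq (a b : T) : a != b -> b != a. Proof. by rewrite eq_sym. Qed.

Lemma keyK v u x w y : chordless adj v u x w -> ~~ dstar adj v [set v; u] [set v; w] ->
  adj v y -> adj y x -> y = u \/ y = w.
Proof.
move=> ch nd hvy hyx.
case: (eqVneq y u) => [->|yu]; first by left.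
case: (eqVneq y w) => [->|yw]; first by right.
exfalso; move/negP: nd; apply.
move: (ch) => /and3P [/and5P [h1 h2 h3 h4 /andP [h5 h6]] h7 h8].
have s1 : square adj u v w x.
  by rewrite /square (adj_sym u v) h1 (adj_sym v w) h4 (adj_sym w x) h3 (adj_sym x u) h2 h6 h5.
have s2 : square adj u v y x.
  by rewrite /square (adj_sym u v) h1 hvy hyx (adj_sym x u) h2 eq_sym yu h5.
have d1 := delta_two s1 s2 (eq_sym_neq yw).
have d1' : delta adj [set v; u] [set u; x] by rewrite setUC.
have dv1 : dv adj v [set v; u] [set u; x] by rewrite /dv d1' Eat_vu.
have dv2 : dv adj v [set u; x] [set v; w].
  rewrite /dv /delta !edgeP h2 (adj_sym v w) h4 Eat_vu ?orbT ?(adj_sym v w) //=.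
  rewrite andbT;   apply/orP; right; apply/orP; left; apply/existsP; exists v; apply/existsP; exists u.
  apply/existsP; exists x; apply/existsP; exists w; rewrite ch /=.
  by rewrite setUC !eqxx !orbT.
exact: dstar_trans (dv_dstar dv1) (dv_dstar dv2).
Qed.

Lemma Fv_intro v u x w : chordless adj v u x w -> ~~ dstar adj v [set v; u] [set v; w] ->
  [set u; x] \in Fv adj v /\ [set x; w] \in Fv adj v.
Proof.
move=> ch nd.
move: (ch) => /and3P [/and5P [h1 h2 h3 h4 /andP [h5 h6]] h7 h8].
have vu := adj_neq h1.
have vw : v != w by rewrite eq_sym adj_neq.
split; rewrite inE edgeP ?h2 ?h3 !inE ?(negbTE vu) ?(negbTE h5) ?(negbTE vw) /=;
  apply/existsP; exists u; apply/existsP; exists x; apply/existsP; exists w;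
  by rewrite nd ch !eqxx ?orbT.
Qed.

Lemma Fv_elim v f : f \in Fv adj v -> exists u x w,
  [/\ ~~ dstar adj v [set v; u] [set v; w], chordless adj v u x w & f = [set u; x]].
Proof.
rewrite inE => /and3P [_ _ /existsP [u /existsP [x /existsP [w /and3P [nd ch /orP [/eqP E|/eqP E]]]]]].
  by exists u, x, w.
exists w, x, u; split => //.
- by apply: contra nd; apply: dstar_sym.
- exact: chordless_sym.
- by rewrite E setUC.
Qed.

Lemma Fv_prim v u x : [set u; x] \in Fv adj v -> adj v u -> 
  exists w, ~~ dstar adj v [set v; u] [set v; w] /\ chordless adj v u x w.
Proof.
move=> /Fv_elim [u' [x' [w [nd ch E]]]] hvu.
move: (ch) => /and3P [_ _ h8].
case: (set2_inj E) => [[-> ->]|[E1 E2]]; first by exists w.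
by subst; rewrite hvu in h8.
Qed.


Lemma SvE_Fv v f : f \in SvE adj v -> f \notin Eat adj v -> f \in Fv adj v.
Proof. by rewrite /SvE in_setU => /orP [->|]. Qed.

Lemma Fv_notv v (f : {set T}) : v \in f -> f \notin Fv adj v.
Proof. by move=> h; rewrite inE h andbF. Qed.

Lemma Fv_xor v p q : [set p; q] \in Fv adj v -> adj v p != adj v q.
Proof.
move=> /Fv_elim [u [x [w [_ /and3P [/and5P [h1 _ _ _ _] _ h8] E]]]].
by case: (set2_inj E) => [[-> ->]|[-> ->]]; rewrite h1 (negbTE h8).
Qed.

Lemma no_cycle v p1 q1 p2 q2 : [set p1; q1] \in Fv adj v -> adj v p1 -> adj v p2 ->
  adj p2 q1 -> adj p1 q2 -> adj q2 p2 -> v != q2 -> p1 != p2 -> q1 != q2 -> False.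
Proof.
move=> hF a1 a2 a3 a4 a5 n1 n2 n3.
case: (Fv_prim hF a1) => w [nd ch].
case: (keyK ch nd a2 a3) => E; first by rewrite E eqxx in n2.
subst w.
move: (ch) => /and3P [s1 _ _].
have s2 : square adj v p1 q2 p2 by rewrite /square a1 a4 a5 adj_sym a2 n1 n2.
have d := delta_two s1 s2 n3.
have : dv adj v [set v; p1] [set v; p2] by rewrite /dv d Eat_vu.
by move/dv_dstar; apply/negP.
Qed.

Lemma card_I14 (A : {set {set T}}) e1 e2 e3 e4 : e1 \in A -> e4 \in A -> e2 \notin A ->
  e3 \notin A -> e1 != e4 -> #|[set e1; e2; e3; e4] :&: A| = 2.
Proof.
move=> h1 h4 h2 h3 n.
have -> : [set e1; e2; e3; e4] :&: A = [set e1; e4].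
  apply/setP=> z; rewrite !inE.
  case: (eqVneq z e1) => [->|_]; first by rewrite h1.
  case: (eqVneq z e4) => [->|_]; first by rewrite h4 !orbT.
  case: (eqVneq z e2) => [->|_]; first by rewrite (negbTE h2).
  case: (eqVneq z e3) => [->|_]; first by rewrite (negbTE h3).
  by [].
by rewrite cards2 n.
Qed.

Lemma card_I23 (A : {set {set T}}) e1 e2 e3 e4 : e2 \in A -> e3 \in A -> e1 \notin A ->
  e4 \notin A -> e2 != e3 -> #|[set e1; e2; e3; e4] :&: A| = 2.
Proof.
move=> h2 h3 h1 h4 n.
have -> : [set e1; e2; e3; e4] :&: A = [set e2; e3].
  apply/setP=> z; rewrite !inE.
  case: (eqVneq z e2) => [->|_]; first by rewrite h2 !orbT.
  case: (eqVneq z e3) => [->|_]; first by rewrite h3 !orbT.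
  case: (eqVneq z e1) => [->|_]; first by rewrite (negbTE h1).
  case: (eqVneq z e4) => [->|_]; first by rewrite (negbTE h4).
  by [].
by rewrite cards2 n.
Qed.

Lemma E4_rot (a b c d : T) :
  [set [set a; b]; [set b; c]; [set c; d]; [set d; a]] =
  [set [set b; c]; [set c; d]; [set d; a]; [set a; b]].
Proof.
apply/setP=> z; rewrite !inE.
by case: (z == [set a; b]); case: (z == [set b; c]); case: (z == [set c; d]);
  case: (z == [set d; a]).
Qed.

Lemma square_rot (r : rel T) a b c d : square r a b c d -> square r b c d a.
Proof.
case/and5P=> h1 h2 h3 h4 /andP [h5 h6].
by rewrite /square h1 h2 h3 h4 h6 eq_sym h5.
Qed.

Lemma sq_at_v v b c d : square (adjS adj v) v b c d ->
  #|[set [set v; b]; [set b; c]; [set c; d]; [set d; v]] :&: Eat adj v| = 2 /\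
  #|[set [set v; b]; [set b; c]; [set c; d]; [set d; v]] :&: Fv adj v| = 2.
Proof.
case/and5P=> h1 h2 h3 h4 /andP [h5 h6].
have a1 := adjS_adj h1; have a4 := adjS_adj h4.
have vb := adj_neq a1.
have vd : v != d by rewrite eq_sym adj_neq.
have e1 : [set v; b] \in Eat adj v by rewrite EatP a1 eqxx.
have e4 : [set d; v] \in Eat adj v by rewrite EatP a4 eqxx orbT.
have e2 : [set b; c] \notin Eat adj v by rewrite EatP (negbTE vb) (negbTE h5) andbF.
have e3 : [set c; d] \notin Eat adj v by rewrite EatP (negbTE vd) (negbTE h5) andbF.
have f2 := SvE_Fv h2 e2; have f3 := SvE_Fv h3 e3.
have f1 : [set v; b] \notin Fv adj v by apply: Fv_notv; rewrite !inE eqxx.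
have f4 : [set d; v] \notin Fv adj v by apply: Fv_notv; rewrite !inE eqxx orbT.
split.
  apply: card_I14 => //; apply/eqP => /set2_inj [[E _]|[_ E]].
    by rewrite E eqxx in vd.
  by rewrite E eqxx in h6.
apply: card_I23 => //; apply/eqP => /set2_inj [[E1 E2]|[E _]].
  by rewrite E1 E2 eqxx in h6.
by rewrite E eqxx in h6.
Qed.


Lemma adjE v a b : adjS adj v a b = ([set a; b] \in SvE adj v).
Proof. by []. Qed.

Lemma sq_no_v v a b c d : square (adjS adj v) a b c d ->
  v != a -> v != b -> v != c -> v != d -> False.
Proof.
case/and5P=> h1 h2 h3 h4 /andP [h5 h6] na nb nc nd.
have notE : forall p q, v != p -> v != q -> [set p; q] \notin Eat adj v.
  by move=> p q np nq; rewrite EatP (negbTE np) (negbTE nq) andbF.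
have f1 := SvE_Fv h1 (notE _ _ na nb); have f2 := SvE_Fv h2 (notE _ _ nb nc).
have f3 := SvE_Fv h3 (notE _ _ nc nd); have f4 := SvE_Fv h4 (notE _ _ nd na).
have x1 := Fv_xor f1; have x2 := Fv_xor f2; have x3 := Fv_xor f3; have x4 := Fv_xor f4.
have a1 := adjS_adj h1; have a2 := adjS_adj h2; have a3 := adjS_adj h3; have a4 := adjS_adj h4.
case Ha: (adj v a) x1 x4 => x1 x4.
  have Hb : adj v b = false by move: x1; case: (adj v b).
  have Hd : adj v d = false by move: x4; case: (adj v d).
  have Hc : adj v c by move: x2; rewrite Hb; case: (adj v c).
  apply: (no_cycle f1 Ha Hc _ _ _ nd h5 h6).
    1-3: by rewrite adj_sym.
have Hb : adj v b by move: x1; case: (adj v b).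
have Hd : adj v d by move: x4; case: (adj v d).
have Hc : adj v c = false by move: x2; rewrite Hb; case: (adj v c).
apply: (no_cycle f2 Hb Hd _ _ _ na h6 _).
all: try by rewrite adj_sym.
all: by rewrite eq_sym.
Qed.

Lemma main_thm (v : T) :
  (forall e f : {set T}, e \in Eat adj v -> f \in Eat adj v ->
     dstar adj v e f ->
     forall u x w : T, e = [set v; u] -> f = [set v; w] ->
       ~~ square (adjS adj v) v u x w)
  /\
  (forall a b c d : T, square (adjS adj v) a b c d ->
     #|[set [set a; b]; [set b; c]; [set c; d]; [set d; a]] :&: Eat adj v| = 2
     /\ #|[set [set a; b]; [set b; c]; [set c; d]; [set d; a]] :&: Fv adj v| = 2)
  /\
  (forall f : {set T}, f \in Fv adj v ->
     exists e : {set T}, e \in Eat adj v /\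
       exists a b c d : T,
         [/\ chordless adj a b c d, square (adjS adj v) a b c d,
             e = [set a; b] & f = [set c; d]])
  /\
  (forall x : T, nonprimal adj v x ->
     exists u w : T, square (adjS adj v) v u x w /\
       (forall y : T, adj v y -> adj y x -> y = u \/ y = w)).
Proof.
split.
  move=> e f he hf hd u x w Ee Ef; subst e f; apply/negP => sq.
  move: (sq) => /and5P [h1 h2 h3 h4 /andP [h5 h6]].
  have avu : adj v u by move: he; rewrite EatP; case/andP.
  have avw : adj v w by move: hf; rewrite EatP; case/andP.
  have nE : [set u; x] \notin Eat adj v.
    by rewrite EatP (negbTE (adj_neq avu)) (negbTE h5) andbF.
  case: (Fv_prim (SvE_Fv h2 nE) avu) => w' [nd ch].
  have awx : adj w x by rewrite adj_sym; exact: (adjS_adj h3).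
  case: (keyK ch nd avw awx) => E.
    by rewrite E eqxx in h6.
  by subst w'; rewrite hd in nd.
split.
  move=> a b c d sq.
  case: (eqVneq v a) => [Ea|na]; first by subst a; exact: sq_at_v.
  case: (eqVneq v b) => [Eb|nb].
    rewrite E4_rot; subst b; exact: sq_at_v (square_rot sq).
  case: (eqVneq v c) => [Ec|nc].
    rewrite E4_rot E4_rot; subst c; exact: sq_at_v (square_rot (square_rot sq)).
  case: (eqVneq v d) => [Ed|nd].
    rewrite E4_rot E4_rot E4_rot; subst d.
    exact: sq_at_v (square_rot (square_rot (square_rot sq))).
  by case: (sq_no_v sq na nb nc nd).
split.
  move=> f /Fv_elim [u [x [w [nd ch Ef]]]].
  have [Fux Fxw] := Fv_intro ch nd.
  move: (ch) => /and3P [/and5P [h1 h2 h3 h4 /andP [h5 h6]] h7 h8].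
  exists [set v; w]; split; first by rewrite EatP eqxx andbT adj_sym.
  exists v, w, x, u; split.
  - exact: chordless_sym.
  - rewrite /square !adjE /SvE !in_setU EatP (adj_sym v w) h4 eqxx /=.
    rewrite (setUC [set w] [set x]) Fxw orbT /= (setUC [set x] [set u]) Fux orbT /=.
    by rewrite EatP (adj_sym u v) h1 eqxx orbT /= h5 eq_sym h6.
  - by [].
  - by rewrite Ef setUC.
move=> x /and3P [hS xv nvx].
move: hS; rewrite inE => /existsP [e /andP [heS hxe]].
move: (heS); rewrite /SvE in_setU => /orP [hE|hF].
  move: hE; rewrite inE => /andP [/(EsetP) [p [q [apq Ee]]] hve].
  subst e; move: hve hxe; rewrite !inE.
  case/orP=> /eqP Ev; case/orP=> /eqP Ex; subst.
  - by rewrite eqxx in xv.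
  - by rewrite apq in nvx.
  - by rewrite adj_sym apq in nvx.
  - by rewrite eqxx in xv.
case: (Fv_elim hF) => u [x' [w [nd ch Ee]]].
move: (ch) => /and3P [/and5P [h1 h2 h3 h4 /andP [h5 h6]] h7 h8].
move: hxe; rewrite Ee !inE => /orP [/eqP Ex|/eqP Ex]; subst x.
  by rewrite h1 in nvx.
have [Fux Fxw] := Fv_intro ch nd.
exists u, w; split.
  rewrite /square !adjE /SvE !in_setU Fux Fxw orbT /= EatP h1 eqxx /=.
  by rewrite orbT /= EatP h4 eqxx orbT /= h5 h6.
move=> y avy ayx; exact: keyK ch nd avy ayx.
Qed.

End H.

Theorem corollary3p3 (T : finType) (adj : rel T)
  (adj_sym : symmetric adj) (adj_irr : irreflexive adj) (v : T) :
  (* (1) *)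
  (forall e f : {set T}, e \in Eat adj v -> f \in Eat adj v ->
     dstar adj v e f ->
     forall u x w : T, e = [set v; u] -> f = [set v; w] ->
       ~~ square (adjS adj v) v u x w)
  /\
  (* (2a) every 4-cycle of S_v has two edges in E_v and two in F_v *)
  (forall a b c d : T, square (adjS adj v) a b c d ->
     #|[set [set a; b]; [set b; c]; [set c; d]; [set d; a]] :&: Eat adj v| = 2
     /\ #|[set [set a; b]; [set b; c]; [set c; d]; [set d; a]] :&: Fv adj v| = 2)
  /\
  (* (2b) every f in F_v is opposite to a primal edge in a chordless square of S_v *)
  (forall f : {set T}, f \in Fv adj v ->
     exists e : {set T}, e \in Eat adj v /\
       exists a b c d : T,
         [/\ chordless adj a b c d, square (adjS adj v) a b c d,
             e = [set a; b] & f = [set c; d]])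
  /\
  (* (3) every non-primal vertex is the unique top vertex of a square at v *)
  (forall x : T, nonprimal adj v x ->
     exists u w : T, square (adjS adj v) v u x w /\
       (forall y : T, adj v y -> adj y x -> y = u \/ y = w)).
Proof. exact: main_thm. Qed.
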